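(* For every $n\ge 2$, under the Yule model, $$E_Y(D_n)=2n(n+1)\sum_{i=2}^n\frac1i-2n(n-1).$$
   Context: $\mathcal{BT}_n$ is the set of binary phylogenetic trees with leaves bijectively labeled by $\{1,\dots,n\}$ (rooted, every internal node with exactly two children). For leaves $i,j$ of $T$, the nodal distance $d_T(i,j)$ is the number of edges of the undirected path between them, and the total area is $D(T)=\sum_{1\le i<j\le n}d_T(i,j)$. $D_n$ is $D(T)$ for random $T\in\mathcal{BT}_n$. Under the Yule model $T$ has probability $P_Y(T)=\frac{2^{n-1}}{n!}\prod_{v\in V_{int}(T)}\frac{1}{\kappa_T(v)-1}$, with $V_{int}(T)$ the internal nodes and $\kappa_T(v)$ the number of leaves below $v$; $E_Y$ denotes expectation under it. *)

(* Defs.v *)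
From HB Require Import structures.
From mathcomp Require Import all_boot all_order all_algebra.
Set Implicit Arguments. Unset Strict Implicit. Unset Printing Implicit Defensive.
Import Order.TTheory GRing.Theory Num.Theory.

(* Children of a node are unordered in a phylogenetic tree; we represent each
   unordered tree by its unique canonical ordered representative (see
   [canonical] below). *)
Inductive tree := Leaf of nat | Node of tree & tree.

Fixpoint tree_enc (t : tree) : GenTree.tree nat :=
  match t with
  | Leaf a => GenTree.Leaf a
  | Node l r => GenTree.Node 0 [:: tree_enc l; tree_enc r]
  end.

Fixpoint tree_dec (g : GenTree.tree nat) : option tree :=
  match g with
  | GenTree.Leaf a => Some (Leaf a)
  | GenTree.Node _ [:: gl; gr] =>
      match tree_dec gl, tree_dec gr with
      | Some l, Some r => Some (Node l r)
      | _, _ => None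
      end
  | _ => None
  end.

Lemma tree_encK : pcancel tree_enc tree_dec.
Proof. by elim=> [a|l IHl r IHr] //=; rewrite IHl IHr. Qed.

HB.instance Definition _ := Equality.copy tree (pcan_type tree_encK).

Fixpoint leaves (t : tree) : seq nat :=
  match t with Leaf a => [:: a] | Node l r => leaves l ++ leaves r end.

Definition kappa (t : tree) : nat := size (leaves t).

Fixpoint minleaf (t : tree) : nat :=
  match t with Leaf a => a | Node l r => minn (minleaf l) (minleaf r) end.

Fixpoint canonical (t : tree) : bool :=
  match t with
  | Leaf _ => true
  | Node l r => [&& canonical l, canonical r & minleaf l < minleaf r]
  end.

Definition in_BT (n : nat) (t : tree) : bool :=
  canonical t && perm_eq (leaves t) (iota 1 n).

(* all trees with exactly k leaves, leaf labels taken from labs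
   (fuel >= k suffices, since subtrees have strictly fewer leaves) *)
Fixpoint trees_k (labs : seq nat) (fuel k : nat) : seq tree :=
  match fuel with
  | 0 => [::]
  | f.+1 =>
      if k == 1 then map Leaf labs
      else flatten [seq allpairs Node (trees_k labs f a) (trees_k labs f (k - a))
                   | a <- iota 1 k.-1]
  end.

Definition BT (n : nat) : seq tree :=
  undup [seq t <- trees_k (iota 1 n) n n | in_BT n t].

Fixpoint depth (t : tree) (i : nat) : nat :=
  match t with
  | Leaf _ => 0
  | Node l r => if i \in leaves l then (depth l i).+1 else (depth r i).+1
  end.

Fixpoint nodal_dist (t : tree) (i j : nat) : nat :=
  match t with
  | Leaf _ => 0
  | Node l r =>
      if (i \in leaves l) && (j \in leaves l) then nodal_dist l i j
      else if (i \in leaves r) && (j \in leaves r) then nodal_dist r i j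
      else depth t i + depth t j
  end.

Definition total_area (n : nat) (t : tree) : nat :=
  \sum_(1 <= i < n.+1) \sum_(i.+1 <= j < n.+1) nodal_dist t i j.

Local Open Scope ring_scope.

Fixpoint yule_prod (t : tree) : rat :=
  match t with
  | Leaf _ => 1
  | Node l r => ((kappa t).-1%:R)^-1 * yule_prod l * yule_prod r
  end.

Definition P_Y (n : nat) (t : tree) : rat :=
  (2 ^ n.-1)%:R / (n`!)%:R * yule_prod t.

Definition E_Y_D (n : nat) : rat :=
  \sum_(t <- BT n) P_Y n t * (total_area n t)%:R.

(* Main.v *)
Require Import Defs.
From HB Require Import structures.
From mathcomp Require Import all_boot all_order all_algebra.
From mathcomp Require Import zify ring lra.
Import Order.TTheory GRing.Theory Num.Theory.
Set Implicit Arguments. Unset Strict Implicit. Unset Printing Implicit Defensive.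

Fixpoint sack (t : tree) : nat :=
  match t with Leaf _ => 0 | Node l r => sack l + kappa l + sack r + kappa r end.
Fixpoint dd (t : tree) : nat :=
  match t with Leaf _ => 0
  | Node l r => dd l + dd r + 2 * (kappa r * sack l + kappa l * sack r + 2 * (kappa l * kappa r)) end.

Lemma kappa_Node l r : kappa (Node l r) = kappa l + kappa r.
Proof. by rewrite /kappa /= size_cat. Qed.

Lemma kappa_gt0 t : 0 < kappa t.
Proof. elim: t => [a|l IHl r IHr] //; rewrite kappa_Node; lia. Qed.

Lemma nodal_sym t i j : nodal_dist t i j = nodal_dist t j i.
Proof.
elim: t => [a|l IHl r IHr] //=.
rewrite (andbC (j \in _)) (andbC (j \in leaves r)) IHl IHr addnC //.
Qed.

Lemma nodal_diag t i : i \in leaves t -> nodal_dist t i i = 0.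
Proof.
elim: t => [a|l IHl r IHr] //= Hi.
rewrite mem_cat in Hi.
case: (boolP (i \in leaves l)) => Hl /=; first exact: IHl.
rewrite (negbTE Hl) /= in Hi; rewrite Hi; exact: IHr.
Qed.

Lemma sumS (T : Type) (s : seq T) (F : T -> nat) :
  \sum_(i <- s) (F i).+1 = \sum_(i <- s) F i + size s.
Proof. elim: s => [|x s IH]; [rewrite !big_nil /=; lia | rewrite !big_cons IH /=; lia]. Qed.

Lemma sack_sum t : uniq (leaves t) -> sack t = \sum_(i <- leaves t) depth t i.
Proof.
elim: t => [a|l IHl r IHr] /=; first by rewrite big_seq1.
rewrite cat_uniq => /and3P [ul dis ur].
have nl : forall i, i \in leaves r -> (i \in leaves l) = false.
  move=> i Hi; apply/negbTE/negP => Hil; case/negP: dis; apply/hasP; by exists i.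
have E1 : \sum_(i <- leaves l) (if i \in leaves l then (depth l i).+1 else (depth r i).+1)
   = \sum_(i <- leaves l) (depth l i).+1 by apply: eq_big_seq => i ->.
have E2 : \sum_(i <- leaves r) (if i \in leaves l then (depth l i).+1 else (depth r i).+1)
   = \sum_(i <- leaves r) (depth r i).+1 by apply: eq_big_seq => i Hi; rewrite nl.
rewrite big_cat /= E1 E2 IHl // IHr // !sumS /kappa; lia.
Qed.

Lemma ND_ll l r i j : i \in leaves l -> j \in leaves l ->
  nodal_dist (Node l r) i j = nodal_dist l i j.
Proof. by move=> /= -> ->. Qed.
Lemma ND_rr l r i j : i \in leaves l = false -> i \in leaves r -> j \in leaves r ->
  nodal_dist (Node l r) i j = nodal_dist r i j.
Proof. by move=> /= -> -> ->. Qed.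
Lemma ND_lr l r i j : i \in leaves l -> i \in leaves r = false ->
  j \in leaves l = false -> j \in leaves r ->
  nodal_dist (Node l r) i j = (depth l i).+1 + (depth r j).+1.
Proof. by move=> /= -> -> -> ->. Qed.

Lemma sum_const_nat (T : Type) (s : seq T) (F : T -> nat) c :
  \sum_(i <- s) (F i + c) = \sum_(i <- s) F i + size s * c.
Proof. elim: s => [|x s IH]; [rewrite !big_nil /=; lia | rewrite !big_cons IH /=; lia]. Qed.
Lemma sum_const_nat2 (T : Type) (s : seq T) (F : T -> nat) c :
  \sum_(i <- s) (c + F i) = size s * c + \sum_(i <- s) F i.
Proof. elim: s => [|x s IH]; [rewrite !big_nil /=; lia | rewrite !big_cons IH /=; lia]. Qed.

Lemma sum_cst (T : Type) (s : seq T) (c : nat) : \sum_(i <- s) c = size s * c.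
Proof. elim: s => [|x s IH]; [rewrite !big_nil /=; lia | rewrite !big_cons IH /=; lia]. Qed.
Lemma sum_mul2 (T : Type) (s : seq T) (F : T -> nat) c :
  \sum_(i <- s) c * (F i).+2 = c * (\sum_(i <- s) F i + 2 * size s).
Proof. elim: s => [|x s IH]; [rewrite !big_nil /=; lia | rewrite !big_cons IH /=; lia]. Qed.

Lemma dd_sum t : uniq (leaves t) ->
  dd t = \sum_(i <- leaves t) \sum_(j <- leaves t) nodal_dist t i j.
Proof.
elim: t => [a|l IHl r IHr]; first by rewrite /= !big_seq1.
change (leaves (Node l r)) with (leaves l ++ leaves r).
rewrite cat_uniq => /and3P [ul dis ur].
have nl : forall i, i \in leaves r -> (i \in leaves l) = false.
  move=> i Hi; apply/negbTE/negP => Hil; case/negP: dis; apply/hasP; by exists i.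
have nr : forall i, i \in leaves l -> (i \in leaves r) = false.
  by move=> i Hi; apply/negbTE/negP => Hir; rewrite nl in Hi.
rewrite big_cat.
rewrite (eq_big_seq (fun i => \sum_(j <- leaves l) nodal_dist l i j +
     (\sum_(j <- leaves r) (depth r j) + size (leaves r) * (depth l i).+2))); last first.
  move=> i Hi; rewrite big_cat; congr (_ + _).
    by apply: eq_big_seq => j Hj; rewrite ND_ll.
  rewrite -sum_const_nat; apply: eq_big_seq => j Hj; rewrite (ND_lr Hi (nr _ Hi) (nl _ Hj) Hj); lia.
rewrite [X in _ = _ + X](eq_big_seq (fun i =>
     (\sum_(j <- leaves l) (depth l j) + size (leaves l) * (depth r i).+2) +
     \sum_(j <- leaves r) nodal_dist r i j)); last first.
  move=> i Hi; rewrite big_cat; congr (_ + _).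
    rewrite -sum_const_nat; apply: eq_big_seq => j Hj.
    rewrite nodal_sym (ND_lr Hj (nr _ Hj) (nl _ Hi) Hi); lia.
  by apply: eq_big_seq => j Hj; rewrite (ND_rr (nl _ Hi) Hi Hj).
rewrite !big_split /= -IHl // -IHr // -!sack_sum // !sum_cst !sum_mul2 -!sack_sum // /kappa; lia.
Qed.

Lemma tri (f : nat -> nat -> nat) n : (forall i j, f i j = f j i) ->
  2 * \sum_(1 <= i < n.+1) \sum_(i.+1 <= j < n.+1) f i j + \sum_(1 <= i < n.+1) f i i
  = \sum_(1 <= i < n.+1) \sum_(1 <= j < n.+1) f i j.
Proof.
move=> fs; elim: n => [|n IH]; first by rewrite !big_geq.
rewrite (big_nat_recr n.+1) // [X in _ + X](big_nat_recr n.+1) //.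
rewrite [X in _ = X](big_nat_recr n.+1) //= (big_geq (m := n.+2)) // addn0.
rewrite [X in _ = _ + X](big_nat_recr n.+1) //=.
rewrite (eq_big_nat _ _ (F1 := fun i => \sum_(i.+1 <= j < n.+2) f i j)
    (F2 := fun i => \sum_(i.+1 <= j < n.+1) f i j + f i n.+1)); last first.
  by move=> i /andP [_ Hi]; rewrite big_nat_recr.
rewrite [X in _ = X + _](eq_big_nat _ _ (F1 := fun i => \sum_(1 <= j < n.+2) f i j)
    (F2 := fun i => \sum_(1 <= j < n.+1) f i j + f i n.+1)); last first.
  by move=> i /andP [Hi _]; rewrite big_nat_recr.
rewrite !big_split /= -IH.
have -> : \sum_(1 <= i < n.+1) f n.+1 i = \sum_(1 <= i < n.+1) f i n.+1 by apply: eq_bigr => i _; rewrite fs.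
lia.
Qed.

Lemma area_dd n t : perm_eq (leaves t) (iota 1 n) -> 2 * total_area n t = dd t.
Proof.
move=> pt.
have u : uniq (leaves t) by rewrite (perm_uniq pt) iota_uniq.
have ii : index_iota 1 n.+1 = iota 1 n by rewrite /index_iota subn1.
rewrite dd_sum // /total_area.
have := @tri (nodal_dist t) n (nodal_sym t).
rewrite (eq_big_nat _ _ (F1 := fun i => nodal_dist t i i) (F2 := fun _ => 0)); last first.
  move=> i ir; apply: nodal_diag; rewrite (perm_mem pt) mem_iota; lia.
rewrite big1_eq addn0 => ->.
rewrite ii (perm_big _ pt); apply: eq_bigr => i _.
by rewrite (perm_big _ pt).
Qed.


Fixpoint splits (r : seq nat) : seq (seq nat * seq nat) :=
  if r is y :: r' then [seq (y :: p.1, p.2) | p <- splits r'] ++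
                       [seq (p.1, y :: p.2) | p <- splits r']
  else [:: ([::], [::])].

Fixpoint E (f : nat) (s : seq nat) : seq tree :=
  match f with
  | 0 => [::]
  | f'.+1 =>
    match s with
    | [::] => [::]
    | x :: rest => if rest is [::] then [:: Leaf x] else
        flatten [seq [seq Node l r | l <- E f' (x :: p.1), r <- E f' p.2]
                | p <- splits rest & p.2 != [::]]
    end
  end.

Lemma splitsP r p : p \in splits r ->
  [/\ perm_eq (p.1 ++ p.2) r, subseq p.1 r & subseq p.2 r].
Proof.
elim: r p => [|y r IH] p /=; first by rewrite inE => /eqP -> /=.
rewrite mem_cat => /orP [] /mapP [q /IH [H1 H2 H3] ->] /=.
- split; first by rewrite perm_cons.
  + by rewrite eqxx.
  + exact: (subseq_trans H3 (subseq_cons r y)).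
- split.
  + rewrite -(perm_cons y) in H1. apply: perm_trans H1.
    by rewrite -cat1s perm_catCA.
  + exact: (subseq_trans H2 (subseq_cons r y)).
  + by rewrite eqxx.
Qed.

Lemma splits_filter (a : pred nat) r : ([seq x <- r | a x], [seq x <- r | ~~ a x]) \in splits r.
Proof.
elim: r => [|y r IH] /=; first by rewrite inE.
rewrite mem_cat; case: (a y) => /=.
- by apply/orP; left; apply/mapP; exists ([seq x <- r | a x], [seq x <- r | ~~ a x]).
- by apply/orP; right; apply/mapP; exists ([seq x <- r | a x], [seq x <- r | ~~ a x]).
Qed.

Lemma splits_uniq r : uniq r -> uniq (splits r).
Proof.
elim: r => [|y r IH] //= /andP [yr ur].
rewrite cat_uniq !map_inj_uniq ?IH //; last first.
  by move=> [a b] [c d] /= [-> ->].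
  by move=> [a b] [c d] /= [-> ->].
rewrite andbT; apply/hasPn => q /mapP [p pin ->]; apply/negP => /mapP [p' p'in] [E1 _].
case: (splitsP pin) => H1 _ _.
have : y \in r by rewrite -(perm_mem H1) mem_cat E1 mem_head.
by rewrite (negbTE yr).
Qed.

Lemma mem_E_Node f x rest l r : rest != [::] ->
  Node l r \in E f.+1 (x :: rest) =
  has (fun p => [&& p.2 != [::], l \in E f (x :: p.1) & r \in E f p.2]) (splits rest).
Proof.
case: rest => // y rr _; rewrite [E _ _]/=.
apply/idP/hasP.
- case/flatten_mapP => p; rewrite mem_filter => /andP [p2 pin].
  case/allpairsP => [[l' r'] [Hl Hr /= [-> ->]]].
  by exists p => //; rewrite p2 Hl Hr.
- case=> p pin /and3P [p2 Hl Hr]; apply/flatten_mapP; exists p.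
    by rewrite mem_filter p2.
  exact: allpairs_f.
Qed.

Lemma E_inv f x rest t : rest != [::] -> t \in E f.+1 (x :: rest) ->
  exists l r, t = Node l r.
Proof.
case: rest => // y rr _; rewrite [E _ _]/=.
case/flatten_mapP => p _ /allpairsP [[l' r'] [_ _ /= ->]]; by exists l', r'.
Qed.

Lemma E_perm f s t : t \in E f s -> perm_eq (leaves t) s.
Proof.
elim: f s t => [|f IH] [|x rest] t //.
case: (eqVneq rest [::]) => [-> | rn].
  by rewrite /= inE => /eqP -> /=.
move=> tin; case: (E_inv rn tin) => l [r Et]; subst t.
move: tin; rewrite mem_E_Node // => /hasP [p pin /and3P [_ Hl Hr]].
case: (splitsP pin) => Hp _ _.
rewrite /=; apply: perm_trans (perm_cat (IH _ _ Hl) (IH _ _ Hr)) _.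
by rewrite /= perm_cons.
Qed.

Lemma kappa_E f s t : t \in E f s -> kappa t = size s.
Proof. by move=> /E_perm /perm_size. Qed.

Lemma minleaf_mem t : minleaf t \in leaves t.
Proof.
elim: t => [a|l IHl r IHr] /=; first by rewrite inE.
rewrite mem_cat; case: (leqP (minleaf l) (minleaf r)) => H.
  by rewrite IHl.
by rewrite IHr orbT.
Qed.

Lemma minleaf_le t y : y \in leaves t -> minleaf t <= y.
Proof.
elim: t => [a|l IHl r IHr] /=; first by rewrite inE => /eqP ->.
rewrite mem_cat geq_min => /orP [/IHl -> | /IHr ->] //; by rewrite orbT.
Qed.

Lemma sorted_sub1 x rest p : sorted ltn (x :: rest) -> subseq p rest -> sorted ltn (x :: p).
Proof.
move=> so sp; apply: (subseq_sorted ltn_trans _ so); by rewrite /= eqxx.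
Qed.

Lemma sorted_sub2 x rest p : sorted ltn (x :: rest) -> subseq p rest -> sorted ltn p.
Proof.
move=> so sp; apply: (subseq_sorted ltn_trans sp); exact: path_sorted so.
Qed.

Lemma E_canon f s t : sorted ltn s -> t \in E f s -> canonical t.
Proof.
elim: f s t => [|f IH] [|x rest] t //.
case: (eqVneq rest [::]) => [-> | rn].
  by rewrite /= inE => _ /eqP ->.
move=> so tin; case: (E_inv rn tin) => l [r Et]; subst t.
move: tin; rewrite mem_E_Node // => /hasP [p pin /and3P [_ Hl Hr]].
case: (splitsP pin) => Hp s1 s2.
rewrite /= (IH _ _ (sorted_sub1 so s1) Hl) (IH _ _ (sorted_sub2 so s2) Hr) /=.
have xl : x \in leaves l by rewrite (perm_mem (E_perm Hl)) mem_head.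
apply: (leq_ltn_trans (minleaf_le xl)).
have : minleaf r \in rest.
  by rewrite -(perm_mem Hp) mem_cat -(perm_mem (E_perm Hr)) minleaf_mem orbT.
by move: (order_path_min ltn_trans so) => /allP H /H.
Qed.

Lemma filter_nil (T : Type) (a : pred T) s : ~~ has a s -> filter a s = [::].
Proof. by elim: s => //= y s IH; case: (a y) => //= /IH. Qed.

Lemma ar1 a b c : a + b = c.+1 -> 0 < a -> 0 < b -> 0 < c.
Proof. lia. Qed.
Lemma ar2 a b c f : a + b = c.+1 -> 0 < b -> c.+1 <= f.+1 -> a <= f.
Proof. lia. Qed.

Lemma E_complete f s t : sorted ltn s -> size s <= f -> canonical t ->
  perm_eq (leaves t) s -> t \in E f s.
Proof.
elim: f s t => [|f IH] s t so sz ct pt.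
  move: sz; rewrite leqn0 => /nilP Es; subst s.
  by move: (perm_size pt) (kappa_gt0 t); rewrite /kappa => ->.
case: s so sz pt => [|x rest] so sz pt.
  by move: (perm_size pt) (kappa_gt0 t); rewrite /kappa => ->.
case: t ct pt => [a | l r] ct pt.
  have := perm_size pt; case: rest so sz pt => // _ _ pt _.
  have : x \in [:: a] by rewrite (perm_mem pt) mem_head.
  by rewrite inE => /eqP ->; rewrite /= inE.
set L := leaves l; set R := leaves r.
move: ct => /= /and3P [cl cr lt].
have us : uniq (x :: rest) by apply: (sorted_uniq ltn_trans ltnn).
have U : uniq (L ++ R) by rewrite (perm_uniq pt).
move: (U); rewrite cat_uniq => /and3P [uL dis uR].
have xmin : forall y, y \in x :: rest -> x <= y.
  move=> y; rewrite inE => /orP [/eqP -> // |].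
  by move: (order_path_min ltn_trans so) => /allP H /H /ltnW.
have xL : x \in L.
  have : x \in L ++ R by rewrite (perm_mem pt) mem_head.
  rewrite mem_cat => /orP [// | xR].
  have h1 := minleaf_le xR.
  have h2 : x <= minleaf l.
    by apply: xmin; rewrite -(perm_mem pt) mem_cat minleaf_mem.
  have : minleaf r < minleaf r by apply: (leq_ltn_trans h1); apply: leq_ltn_trans h2 lt.
  by rewrite ltnn.
have fLL : [seq y <- L | y \in L] = L by apply/all_filterP/allP.
have fLR : [seq y <- R | y \in L] = [::].
  exact: filter_nil dis.
have fNL : [seq y <- L | ~~ (y \in L)] = [::].
  by apply: filter_nil; apply/hasPn => z /= ->.
have fNR : [seq y <- R | ~~ (y \in L)] = R.
  by apply/all_filterP/allP => z zR; apply/negP => zL; case/negP: dis; apply/hasP; exists z.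
have pL : perm_eq L (x :: [seq y <- rest | y \in L]).
  have := perm_filter (fun y => y \in L) pt; rewrite filter_cat fLL fLR cats0 /= xL //.
have pR : perm_eq R [seq y <- rest | ~~ (y \in L)].
  have := perm_filter (fun y => ~~ (y \in L)) pt; rewrite filter_cat fNL fNR /= xL //.
have sLR : size L + size R = (size rest).+1 by rewrite -size_cat (perm_size pt).
have kl := kappa_gt0 l; have kr := kappa_gt0 r.
rewrite /kappa -/L -/R in kl kr.
have rn : rest != [::] by rewrite -size_eq0 -lt0n; exact: (ar1 sLR kl kr).
rewrite mem_E_Node //; apply/hasP.
exists ([seq y <- rest | y \in L], [seq y <- rest | ~~ (y \in L)]).
  exact: (splits_filter (fun y => y \in L)).
rewrite /=; apply/and3P; split.
- by rewrite -size_eq0 -lt0n -(perm_size pR).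
- apply: IH => //.
  + apply: (sorted_sub1 so); exact: filter_subseq.
  + rewrite -(perm_size pL); exact: (ar2 sLR kr sz).
- apply: IH => //.
  + apply: (sorted_sub2 so); exact: filter_subseq.
  + rewrite -(perm_size pR); rewrite addnC in sLR; exact: (ar2 sLR kl sz).
Qed.

Lemma uniq_flatten_map (S T : eqType) (F : S -> seq T) (P : seq S) : uniq P ->
  (forall p, p \in P -> uniq (F p)) ->
  (forall p q t, p \in P -> q \in P -> t \in F p -> t \in F q -> p = q) ->
  uniq (flatten (map F P)).
Proof.
elim: P => [|p P IH] //= /andP [pP uP] Hu Hd.
rewrite cat_uniq Hu ?mem_head // IH //; last first.
- by move=> a b t aP bP; apply: Hd; rewrite inE ?aP ?bP orbT.
- by move=> a aP; apply: Hu; rewrite inE aP orbT.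
rewrite andbT; apply/hasPn => t /flatten_mapP [q qP tq]; apply/negP => tp.
have epq : p = q by apply: (Hd p q t); rewrite ?inE ?qP ?eqxx ?orbT.
by subst q; rewrite qP in pP.
Qed.

Lemma E_uniq f s : sorted ltn s -> uniq (E f s).
Proof.
elim: f s => [|f IH] [|x rest] // so.
case: (eqVneq rest [::]) => [-> // | rn].
have urest : uniq rest.
  by apply: (sorted_uniq ltn_trans ltnn); exact: path_sorted so.
move: rn; case: rest so urest => // y rr so urest _.
rewrite [E _ _]/=; apply: uniq_flatten_map.
- exact: filter_uniq (splits_uniq urest).
- move=> p; rewrite mem_filter => /andP [_ pin]; case: (@splitsP (y :: rr) p pin) => _ s1 s2.
  apply: allpairs_uniq; [exact: IH (sorted_sub1 so s1) | exact: IH (sorted_sub2 so s2) |].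
  by move=> [a b] [c d] _ _ /= [-> ->].
- move=> p q t; rewrite !mem_filter => /andP [_ pin] /andP [_ qin].
  case: (@splitsP (y :: rr) p pin) => _ p1 p2; case: (@splitsP (y :: rr) q qin) => _ q1 q2.
  case/allpairsP => [[l r] [Hl Hr /= ->]].
  case/allpairsP => [[l' r'] [Hl' Hr' /= [El Er]]]; subst l' r'.
  have e1 : p.1 = q.1.
    apply: (irr_sorted_eq ltn_trans ltnn (sorted_sub2 so p1) (sorted_sub2 so q1)).
    apply: perm_mem; rewrite -(perm_cons x).
    apply: (@perm_trans _ (leaves l)); [by rewrite perm_sym (E_perm Hl) | exact: E_perm Hl'].
  have e2 : p.2 = q.2.
    apply: (irr_sorted_eq ltn_trans ltnn (sorted_sub2 so p2) (sorted_sub2 so q2)).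
    apply: perm_mem.
    apply: (@perm_trans _ (leaves r)); [by rewrite perm_sym (E_perm Hr) | exact: E_perm Hr'].
  by move: e1 e2; case: p {pin p1 p2 Hl Hr} => ? ?; case: q {qin q1 q2 Hl' Hr'} => ? ? /= -> ->.
Qed.

Lemma TK t labs fuel : all (fun a => a \in labs) (leaves t) -> kappa t <= fuel ->
  t \in trees_k labs fuel (kappa t).
Proof.
elim: t fuel => [a|l IHl r IHr] [|f].
- by [].
- by rewrite /= andbT => al _; apply: map_f.
- by move=> _; rewrite leqn0 (negbTE (lt0n_neq0 (kappa_gt0 _))).
rewrite [leaves _]/= all_cat => /andP [al ar] hk.
have kl := kappa_gt0 l; have kr := kappa_gt0 r.
rewrite kappa_Node in hk *; rewrite [trees_k _ _ _]/=.
have -> : (kappa l + kappa r == 1) = false by apply/eqP; lia.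
apply/flatten_mapP; exists (kappa l).
  rewrite mem_iota; apply/andP; split; [exact: kl | lia].
rewrite addKn; apply: allpairs_f; [apply: IHl | apply: IHr] => //; lia.
Qed.

Lemma BT_perm n : perm_eq (BT n) (E n (iota 1 n)).
Proof.
have so : sorted ltn (iota 1 n) by apply: iota_ltn_sorted.
apply: uniq_perm; [exact: undup_uniq | exact: E_uniq so |].
move=> t; rewrite mem_undup mem_filter /in_BT.
apply/idP/idP.
- case/andP => /andP [ct pt] _; apply: E_complete => //; by rewrite size_iota.
- move=> tin; have ct := E_canon so tin; have pt := E_perm tin.
  rewrite ct pt /=.
  have kt : kappa t = n by rewrite (kappa_E tin) size_iota.
  have := @TK t (iota 1 n) n; rewrite kt; apply => //.
  by apply/allP => a; rewrite (perm_mem pt).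
Qed.

Local Open Scope ring_scope.

Definition H (k : nat) : rat := \sum_(1 <= i < k.+1) (i%:R : rat)^-1.
Definition sr (k : nat) : rat := 2 * k%:R * (H k - 1).
Definition dr (k : nat) : rat := 4 * k%:R * (k%:R + 1) * (H k - 1) - 4 * k%:R * (k%:R - 1).

Lemma HS k : H k.+1 = H k + (k.+1%:R)^-1.
Proof. by rewrite /H big_nat_recr. Qed.

Lemma H1 : H 1 = 1.
Proof. by rewrite /H big_nat1 invr1. Qed.

Lemma tele (f g : nat -> rat) : g 1 = 0 -> (forall k, (0 < k)%N -> g k.+1 = g k + f k) ->
  forall k, (0 < k)%N -> \sum_(1 <= a < k) f a = g k.
Proof.
move=> g1 gS; elim => // k IH _.
case: k IH => [|k] IH; first by rewrite big_geq // g1.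
by rewrite (big_nat_recr k.+1) //= IH // (gS k.+1).
Qed.

Lemma reidx (F : nat -> rat) k : \sum_(1 <= a < k) F (k - a)%N = \sum_(1 <= a < k) F a.
Proof.
rewrite [RHS](big_nat_rev _ _ 1 k) /=; apply: eq_big_nat => a _.
by rewrite add1n subSS.
Qed.

Definition C1 (k : nat) : rat := let K := k%:R in
  (4/3 * K^+3 - 4/3 * K) * H k - 2/9 * K + 10/3 * K^+2 - 28/9 * K^+3.
Definition C2 (k : nat) : rat := let K := k%:R in (K^+2 - K) * H k - 3/2 * (K^+2 - K).
Definition C3 (k : nat) : rat := let K := k%:R in
  (1/3 * K - K^+2 + 2/3 * K^+3) * H k - 5/18 * K + 7/6 * K^+2 - 8/9 * K^+3.
Definition C4 (k : nat) : rat := let K := k%:R in (K - 1) * K * (2 * K - 1) / 6.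
Definition C5 (k : nat) : rat := let K := k%:R in (K * (K - 1) / 2)^+2.

Lemma nz k : (k.+1%:R : rat) != 0.
Proof. by rewrite pnatr_eq0. Qed.

Lemma I1aux (K : rat) k : (0 < k)%N ->
  \sum_(1 <= a < k) (K * sr a + K * a%:R) = K * C2 k + K * (k%:R * (k%:R - 1) / 2).
Proof.
apply: (tele (g := fun k => K * C2 k + K * (k%:R * (k%:R - 1) / 2))).
  by rewrite /C2 H1; field.
move=> j _; rewrite /C2 /sr HS -[(j.+1)%:R]natr1.
have := nz j; rewrite -natr1 => h.
field; done.
Qed.

Lemma I2aux (K : rat) k : (0 < k)%N ->
  \sum_(1 <= a < k) (K * dr a + 2 * K * (K - a%:R) * sr a + 4 * a%:R ^+ 2 * (K - a%:R))
  = K * C1 k + 2 * K ^+ 2 * C2 k - 2 * K * C3 k + 4 * K * C4 k - 4 * C5 k.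
Proof.
apply: (tele (g := fun k => K * C1 k + 2 * K ^+ 2 * C2 k - 2 * K * C3 k + 4 * K * C4 k - 4 * C5 k)).
  by rewrite /C1 /C2 /C3 /C4 /C5 H1; field.
move=> j _; rewrite /C1 /C2 /C3 /C4 /C5 /sr /dr HS -[(j.+1)%:R]natr1.
have := nz j; rewrite -natr1 => h.
field; done.
Qed.

Lemma I0 k : \sum_(1 <= a < k) (a%:R : rat) = k%:R * (k%:R - 1) / 2.
Proof.
case: k => [|k]; first by rewrite big_geq // mul0r mul0r.
apply: (tele (g := fun k => k%:R * (k%:R - 1) / 2)) => //.
move=> j _ /=; rewrite -[(j.+1)%:R]natr1; by field.
Qed.

Lemma I1 k : (0 < k)%N ->
  \sum_(1 <= a < k) a%:R * (sr a + sr (k - a)%N + k%:R) = k%:R * (k%:R - 1) / 2 * sr k.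
Proof.
move=> k0.
have E : forall a, (1 <= a < k)%N -> a%:R * (sr a + sr (k - a)%N + k%:R) =
   (a%:R * sr a + a%:R * k%:R) + (k%:R - (k - a)%N%:R) * sr (k - a)%N.
  move=> a /andP [_ ak]; rewrite natrB ?(ltnW ak) //; ring.
rewrite (eq_big_nat _ _ E) big_split /= (reidx (fun c => (k%:R - c%:R) * sr c)) -big_split /=.
rewrite (eq_bigr (fun a => k%:R * sr a + k%:R * a%:R)); last by move=> a _; ring.
by rewrite I1aux // /C2 /sr; field.
Qed.

Lemma I2 k : (0 < k)%N ->
  \sum_(1 <= a < k) a%:R * (dr a + dr (k - a)%N +
     2 * ((k - a)%N%:R * sr a + a%:R * sr (k - a)%N + 2 * (a%:R * (k - a)%N%:R)))
  = k%:R * (k%:R - 1) / 2 * dr k.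
Proof.
move=> k0.
have E : forall a, (1 <= a < k)%N -> a%:R * (dr a + dr (k - a)%N +
     2 * ((k - a)%N%:R * sr a + a%:R * sr (k - a)%N + 2 * (a%:R * (k - a)%N%:R))) =
   (a%:R * dr a + 2 * a%:R * (k%:R - a%:R) * sr a + 4 * a%:R ^+ 2 * (k%:R - a%:R)) +
   (k%:R - (k - a)%N%:R) * (dr (k - a)%N + 2 * (k%:R - (k - a)%N%:R) * sr (k - a)%N).
  move=> a /andP [_ ak]; rewrite !natrB ?(ltnW ak) //; ring.
rewrite (eq_big_nat _ _ E) big_split /=.
rewrite (reidx (fun c => (k%:R - c%:R) * (dr c + 2 * (k%:R - c%:R) * sr c))) -big_split /=.
rewrite (eq_bigr (fun a => k%:R * dr a + 2 * k%:R * (k%:R - a%:R) * sr a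
     + 4 * a%:R ^+ 2 * (k%:R - a%:R))); last by move=> a _; ring.
by rewrite I2aux // /C1 /C2 /C3 /C4 /C5 /sr /dr; field.
Qed.

Lemma yp_Node l r : yule_prod (Node l r) =
  ((kappa l + kappa r).-1%:R)^-1 * yule_prod l * yule_prod r.
Proof. by rewrite -kappa_Node. Qed.

Lemma sum2 (A B : seq tree) (f1 g1 f2 g2 : tree -> rat) :
  \sum_(l <- A) \sum_(r <- B) (f1 l * g1 r + f2 l * g2 r) =
  (\sum_(l <- A) f1 l) * (\sum_(r <- B) g1 r) + (\sum_(l <- A) f2 l) * (\sum_(r <- B) g2 r).
Proof.
rewrite !big_distrlr -big_split /=; apply: eq_bigr => l _; by rewrite -big_split.
Qed.

Lemma lin2 (A : seq tree) (u v : tree -> rat) al be :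
  \sum_(l <- A) (al * u l + be * v l) = al * \sum_(l <- A) u l + be * \sum_(l <- A) v l.
Proof. by rewrite big_split /= -!mulr_sumr. Qed.

Lemma lin3 (A : seq tree) (u v w : tree -> rat) al be ga :
  \sum_(l <- A) (al * u l + be * v l + ga * w l) =
  al * \sum_(l <- A) u l + be * \sum_(l <- A) v l + ga * \sum_(l <- A) w l.
Proof. by rewrite !big_split /= -!mulr_sumr. Qed.

Lemma node_sums (A B : seq tree) (a b : nat) (ZA SA DA ZB SB DB : rat) :
  (forall l, l \in A -> kappa l = a) -> (forall r, r \in B -> kappa r = b) ->
  \sum_(l <- A) yule_prod l = ZA ->
  \sum_(l <- A) yule_prod l * (sack l)%:R = SA ->
  \sum_(l <- A) yule_prod l * (dd l)%:R = DA ->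
  \sum_(r <- B) yule_prod r = ZB ->
  \sum_(r <- B) yule_prod r * (sack r)%:R = SB ->
  \sum_(r <- B) yule_prod r * (dd r)%:R = DB ->
  [/\ \sum_(l <- A) \sum_(r <- B) yule_prod (Node l r) = ((a + b).-1%:R)^-1 * (ZA * ZB),
      \sum_(l <- A) \sum_(r <- B) yule_prod (Node l r) * (sack (Node l r))%:R =
        ((a + b).-1%:R)^-1 * (ZA * ZB * (a + b)%:R + SA * ZB + ZA * SB) &
      \sum_(l <- A) \sum_(r <- B) yule_prod (Node l r) * (dd (Node l r))%:R =
        ((a + b).-1%:R)^-1 * (DA * ZB + ZA * DB +
          2 * (b%:R * SA * ZB + a%:R * ZA * SB + 2 * (a%:R * b%:R) * ZA * ZB))].
Proof.
move=> kA kB zA sA dA zB sB dB.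
set c := ((a + b).-1%:R)^-1.
split.
- rewrite (eq_big_seq (fun l => \sum_(r <- B) ((c * yule_prod l) * yule_prod r + 0 * 0))).
    rewrite sum2 -mulr_sumr zA zB !big1_eq; ring.
  move=> l lA; apply: eq_big_seq => r rB.
  by rewrite yp_Node (kA _ lA) (kB _ rB) mulr0 addr0 -/c.
- rewrite (eq_big_seq (fun l => \sum_(r <- B)
     ((c * (yule_prod l * (sack l)%:R) + c * (a + b)%:R * yule_prod l) * yule_prod r
      + (c * yule_prod l) * (yule_prod r * (sack r)%:R)))).
    rewrite sum2 lin2 -mulr_sumr zA zB sA sB; ring.
  move=> l lA; apply: eq_big_seq => r rB.
  rewrite yp_Node (kA _ lA) (kB _ rB) -/c /= !natrD (kA _ lA) (kB _ rB); ring.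
- rewrite (eq_big_seq (fun l => \sum_(r <- B)
     ((c * (yule_prod l * (dd l)%:R) + c * 2 * b%:R * (yule_prod l * (sack l)%:R)
        + c * 4 * (a%:R * b%:R) * yule_prod l) * yule_prod r
      + (c * yule_prod l) * (yule_prod r * (dd r)%:R + 2 * a%:R * (yule_prod r * (sack r)%:R))))).
    rewrite sum2 lin3 -mulr_sumr.
    have -> : \sum_(r <- B) (yule_prod r * (dd r)%:R + 2 * a%:R * (yule_prod r * (sack r)%:R))
       = DB + 2 * a%:R * SB.
      by rewrite big_split /= -mulr_sumr dB sB.
    rewrite zA zB sA dA; ring.
  move=> l lA; apply: eq_big_seq => r rB.
  rewrite yp_Node (kA _ lA) (kB _ rB) -/c /= !natrD !natrM (kA _ lA) (kB _ rB); ring.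
Qed.

Lemma sum_splits (W : nat -> nat -> rat) r :
  \sum_(p <- splits r) W (size p.1) (size p.2) =
  \sum_(0 <= j < (size r).+1) 'C(size r, j)%:R * W j (size r - j)%N.
Proof.
elim: r W => [|y r IH] W.
  by rewrite /= big_seq1 big_nat1 /= mul1r.
rewrite /= big_cat !big_map /=.
rewrite (IH (fun j i => W j.+1 i)) (IH (fun j i => W j i.+1)) /=.
set m := size r.
rewrite [RHS]big_nat_recl // bin0 mul1r subn0.
rewrite (eq_big_nat _ _ (F1 := fun j => 'C(m.+1, j.+1)%:R * W j.+1 (m.+1 - j.+1)%N)
   (F2 := fun j => 'C(m, j)%:R * W j.+1 (m - j)%N + 'C(m, j.+1)%:R * W j.+1 (m - j)%N)); last first.
  by move=> j _; rewrite binS natrD subSS; ring.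
rewrite big_split /=.
rewrite [X in _ + X = _]big_nat_recl // bin0 mul1r subn0.
rewrite [X in _ = _ + (_ + X)]big_nat_recr //= bin_small // mul0r addr0.
rewrite [X in _ + (_ + X) = _](eq_big_nat _ _ (F1 := fun j => 'C(m, j.+1)%:R * W j.+1 (m - j.+1)%N.+1)
   (F2 := fun j => 'C(m, j.+1)%:R * W j.+1 (m - j)%N)); last first.
  by move=> j /andP [_ jm]; rewrite subnSK.
by rewrite addrCA.
Qed.

Definition Zr (k : nat) : rat := (k`!)%:R / (2 ^ k.-1)%:R.

Lemma pow2_neq0 e : ((2 ^ e)%:R : rat) != 0.
Proof. by rewrite pnatr_eq0 expn_eq0. Qed.

Lemma fact_neq0 e : ((e`!)%:R : rat) != 0.
Proof. by rewrite pnatr_eq0 -lt0n fact_gt0. Qed.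

Lemma Zprod m j : (j < m)%N ->
  'C(m, j)%:R * Zr j.+1 * Zr (m - j) = m`!%:R * j.+1%:R / (2 ^ m.-1)%:R.
Proof.
move=> jm.
have e2 : (2 ^ m.-1 = 2 ^ j * 2 ^ (m - j).-1)%N by rewrite -expnD; congr (2 ^ _)%N; lia.
have ef : ('C(m, j) * (j`! * (m - j)`!) = m`!)%N := bin_fact (ltnW jm).
rewrite /Zr /= e2 -ef factS !natrM.
have h1 := pow2_neq0 j; have h2 := pow2_neq0 (m - j).-1.
field; by rewrite h1 h2.
Qed.

Lemma nz' m : (1 + m%:R : rat) != 0.
Proof. by rewrite addrC natr1 nz. Qed.

Lemma finish (X : nat -> nat -> rat) (T : rat) m : (0 < m)%N ->
  \sum_(1 <= a < m.+1) a%:R * X a (m.+1 - a)%N = m.+1%:R * (m.+1%:R - 1) / 2 * T ->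
  \sum_(0 <= j < m.+1) 'C(m, j)%:R * (if (m - j == 0)%N then 0 else
      ((j.+1 + (m - j)).-1%:R)^-1 * (Zr j.+1 * Zr (m - j)) * X j.+1 (m - j)%N)
  = Zr m.+1 * T.
Proof.
case: m => [|m] // _ hyp.
rewrite big_nat_recr //= subnn eqxx mulr0 addr0.
rewrite (eq_big_nat _ _ (F2 := fun j => ((m.+1)`!%:R / (m.+1%:R * (2 ^ m)%:R)) *
    (j.+1%:R * X j.+1 (m.+2 - j.+1)%N))); last first.
  move=> j /andP [_ jm].
  have -> : (m.+1 - j == 0)%N = false by apply/eqP; lia.
  have -> : (j + (m.+1 - j))%N = m.+1 by lia.
  rewrite subSS.
  rewrite [LHS](_ : _ = (m.+1%:R)^-1 * ('C(m.+1, j)%:R * Zr j.+1 * Zr (m.+1 - j)) *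
     X j.+1 (m.+1 - j)%N); last by ring.
  rewrite Zprod //=.
  have h1 := pow2_neq0 m; have h2 := nz m.
  by field; rewrite ?h1 ?nz' ?pow2_neq0 ?fact_neq0.
rewrite -big_distrr /=.
have -> : \sum_(0 <= j < m.+1) j.+1%:R * X j.+1 (m.+2 - j.+1)%N =
          \sum_(1 <= a < m.+2) a%:R * X a (m.+2 - a)%N by rewrite big_add1.
rewrite hyp /Zr /= !factS !natrM expnS natrM.
have h1 := pow2_neq0 m; have h2 := nz m; have h3 := fact_neq0 m.
by field; rewrite ?h1 ?nz'.
Qed.

Lemma big_allpairs_Node (A B : seq tree) (G : tree -> rat) :
  \sum_(t <- [seq Node l r | l <- A, r <- B]) G t = \sum_(l <- A) \sum_(r <- B) G (Node l r).
Proof.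
elim: A => [|l A IH]; first by rewrite !big_nil.
by rewrite /= big_cat big_map IH big_cons.
Qed.

Lemma sum_E_cons f x y rr (G : tree -> rat) :
  \sum_(t <- E f.+1 [:: x, y & rr]) G t =
  \sum_(p <- splits (y :: rr) | p.2 != [::])
     \sum_(l <- E f (x :: p.1)) \sum_(r <- E f p.2) G (Node l r).
Proof.
have -> : E f.+1 [:: x, y & rr] = flatten [seq [seq Node l r | l <- E f (x :: p.1), r <- E f p.2]
             | p <- splits (y :: rr) & p.2 != [::]] by [].
rewrite big_flatten big_map big_filter; apply: eq_bigr => p _; exact: big_allpairs_Node.
Qed.

Definition XS (a b : nat) : rat := sr a + sr b + (a + b)%:R.
Definition XD (a b : nat) : rat := dr a + dr b + 2 * (b%:R * sr a + a%:R * sr b + 2 * (a%:R * b%:R)).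

Lemma E_sums f s : (0 < size s)%N -> (size s <= f)%N ->
  [/\ \sum_(t <- E f s) yule_prod t = Zr (size s),
      \sum_(t <- E f s) yule_prod t * (sack t)%:R = Zr (size s) * sr (size s) &
      \sum_(t <- E f s) yule_prod t * (dd t)%:R = Zr (size s) * dr (size s)].
Proof.
elim: f s => [|f IH] [|x rest] // s0 sf.
case: rest s0 sf => [|y rr] s0 sf.
  have -> : E f.+1 [:: x] = [:: Leaf x] by [].
  have Z1 : Zr 1 = 1 by rewrite /Zr expn0 divr1.
  rewrite !big_seq1 /= Z1 /sr /dr H1; split; ring.
set m := size (y :: rr).
have Hp : forall p, p \in splits (y :: rr) -> p.2 != [::] ->
  let a := (size p.1).+1 in let b := size p.2 in
  [/\ \sum_(l <- E f (x :: p.1)) \sum_(r <- E f p.2) yule_prod (Node l r)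
        = ((a + b).-1%:R)^-1 * (Zr a * Zr b) * 1,
      \sum_(l <- E f (x :: p.1)) \sum_(r <- E f p.2) yule_prod (Node l r) * (sack (Node l r))%:R
        = ((a + b).-1%:R)^-1 * (Zr a * Zr b) * XS a b &
      \sum_(l <- E f (x :: p.1)) \sum_(r <- E f p.2) yule_prod (Node l r) * (dd (Node l r))%:R
        = ((a + b).-1%:R)^-1 * (Zr a * Zr b) * XD a b].
  move=> p pin p2 a b.
  case: (splitsP pin) => pp _ _.
  have szp : (size p.1 + size p.2 = m)%N by rewrite -size_cat (perm_size pp).
  have b0 : (0 < size p.2)%N by rewrite lt0n size_eq0.
  have sfm : (m.+1 <= f.+1)%N := sf.
  have h1 : ((size p.1).+1 <= f)%N by lia.
  have h2 : (size p.2 <= f)%N by lia.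
  have [zA sA dA] : [/\ _, _ & _] := IH (x :: p.1) erefl h1.
  have [zB sB dB] : [/\ _, _ & _] := IH p.2 b0 h2.
  have := node_sums (a := a) (b := b) (fun l (lin : l \in E f (x :: p.1)) => (kappa_E lin : kappa l = a))
    (fun r (rin : r \in E f p.2) => (kappa_E rin : kappa r = b))
    zA sA dA zB sB dB.
  case=> -> -> ->; split; rewrite /XS /XD /sr /dr; ring.
have m0 : (0 < m)%N by [].
have sizeE : size [:: x, y & rr] = m.+1 by [].
rewrite sizeE.
have key : forall (X : nat -> nat -> rat) (G : tree -> rat),
  (forall p, p \in splits (y :: rr) -> p.2 != [::] ->
     \sum_(l <- E f (x :: p.1)) \sum_(r <- E f p.2) G (Node l r)
       = (((size p.1).+1 + size p.2).-1%:R)^-1 * (Zr (size p.1).+1 * Zr (size p.2)) *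
         X (size p.1).+1 (size p.2)) ->
  \sum_(t <- E f.+1 [:: x, y & rr]) G t =
  \sum_(0 <= j < m.+1) 'C(m, j)%:R * (if (m - j == 0)%N then 0 else
      ((j.+1 + (m - j)).-1%:R)^-1 * (Zr j.+1 * Zr (m - j)) * X j.+1 (m - j)%N).
  move=> X G HG.
  rewrite sum_E_cons big_mkcond.
  rewrite (eq_big_seq (fun p => (fun j i => if (i == 0)%N then 0 else
      ((j.+1 + i).-1%:R)^-1 * (Zr j.+1 * Zr i) * X j.+1 i) (size p.1) (size p.2))).
    exact: (sum_splits (fun j i => if (i == 0)%N then 0 else
      ((j.+1 + i).-1%:R)^-1 * (Zr j.+1 * Zr i) * X j.+1 i) (y :: rr)).
  move=> p pin /=; rewrite size_eq0.
  case: (eqVneq p.2 [::]) => [-> // | p2].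
  exact: (HG p pin p2).
split.
- rewrite (key (fun _ _ => 1)); last by move=> p pin p2; case: (Hp p pin p2).
  rewrite -[RHS]mulr1; apply: (finish (X := fun _ _ => 1)) => //.
  under eq_bigr do rewrite mulr1.
  by rewrite I0 mulr1.
- rewrite (key XS); last by move=> p pin p2; case: (Hp p pin p2).
  apply: (finish (X := XS)) => //.
  rewrite -I1 //; apply: eq_big_nat => a /andP [_ am].
  by rewrite /XS subnKC // ltnW.
- rewrite (key XD); last by move=> p pin p2; case: (Hp p pin p2).
  apply: (finish (X := XD)) => //.
  by rewrite -I2.
Qed.

Unset Implicit Arguments.
Local Open Scope ring_scope.

Theorem mainTheorem16 (n : nat) (hn : (2 <= n)%N) :
  E_Y_D n =
    (2 * n * (n + 1))%:R * (\sum_(2 <= i < n.+1) (i%:R : rat)^-1)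
    - (2 * n * (n - 1))%:R.
Proof.
have so : sorted ltn (iota 1 n) by apply: iota_ltn_sorted.
have -> : E_Y_D n = \sum_(t <- E n (iota 1 n)) P_Y n t * (total_area n t)%:R.
  by apply: perm_big; exact: BT_perm n.
rewrite (eq_big_seq (fun t => ((2 ^ n.-1)%:R / (n`!)%:R / 2) * (yule_prod t * (dd t)%:R))); last first.
  move=> t tin; rewrite /P_Y -(area_dd (E_perm tin)) natrM.
  by field; rewrite fact_neq0.
rewrite -mulr_sumr.
have [_ _ ->] := E_sums (f := n) (s := iota 1 n) (ltac:(rewrite size_iota; lia))
   (ltac:(rewrite size_iota; lia)).
rewrite size_iota.
have Hs : \sum_(2 <= i < n.+1) (i%:R : rat)^-1 = H n - 1.
  rewrite /H [in RHS]big_ltn; last by lia.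
  rewrite invr1; ring.
rewrite Hs /Zr /dr.
have h1 := pow2_neq0 n.-1; have h2 := fact_neq0 n.
rewrite !natrM natrD natrB; last by lia.
by field; rewrite h1 h2.
Qed.
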